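(* For every (convex) polytope $P\subset\mathbb{R}^d$ with vertex set $V(P)$, we have $f(P)=f(V(P))$.
   Context: For a bounded set $S\subset\mathbb{R}^d$ with the Euclidean distance, its Borsuk number $f(S)$ is the minimum number of parts in a partition of $S$ in which every part has diameter strictly smaller than the diameter of $S$ (with $f(S)=+\infty$ if no such partition exists, e.g. when $S$ is a single point). *)

(* Defs.v *)
From HB Require Import structures.
From mathcomp Require Import all_boot all_order all_algebra.
From mathcomp Require Import boolp classical_sets reals.
Set Implicit Arguments. Unset Strict Implicit. Unset Printing Implicit Defensive.
Import Order.TTheory GRing.Theory Num.Theory.
Local Open Scope classical_set_scope.
Local Open Scope ring_scope.

Definition edist (R : realType) (d : nat) (x y : 'rV[R]_d) : R :=
  Num.sqrt (\sum_(i < d) (x ord0 i - y ord0 i) ^+ 2).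

Definition diam (R : realType) (d : nat) (S : set 'rV[R]_d) : R :=
  sup [set edist p.1 p.2 | p in S `*` S].

Definition is_partition (R : realType) (d m : nat) (S : set 'rV[R]_d)
    (A : 'I_m -> set 'rV[R]_d) : Prop :=
  (forall i, A i !=set0) /\
  (forall i j, i != j -> A i `&` A j = set0) /\
  (\bigcup_(i in [set: 'I_m]) A i = S).

Definition borsuk_partitionable (R : realType) (d : nat) (S : set 'rV[R]_d)
    (m : nat) : Prop :=
  exists A : 'I_m -> set 'rV[R]_d,
    is_partition S A /\ forall i, diam (A i) < diam S.

(* Borsuk number f(S): Some (minimal m), or None standing for +infinity. *)
Definition borsuk_number (R : realType) (d : nat) (S : set 'rV[R]_d)
    : option nat :=
  match pselect (exists m, `[< borsuk_partitionable S m >]) with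
  | left h => Some (ex_minn h)
  | right _ => None
  end.

Definition conv_hull (R : realType) (d : nat) (X : seq 'rV[R]_d)
    : set 'rV[R]_d :=
  [set x | exists w : 'I_(size X) -> R,
     (forall i, 0 <= w i) /\ \sum_(i < size X) w i = 1 /\
     x = \sum_(i < size X) w i *: X`_i].

Definition polytope (R : realType) (d : nat) (P : set 'rV[R]_d) : Prop :=
  exists X : seq 'rV[R]_d, X != [::] /\ P = conv_hull X.

Definition vertices (R : realType) (d : nat) (P : set 'rV[R]_d)
    : set 'rV[R]_d :=
  [set x | P x /\ ~ exists y z t, [/\ P y, P z, y != z, 0 < t < 1 &
                                   x = t *: y + (1 - t) *: z]].

(* Main.v *)
Require Import Defs.
From mathcomp Require Import all_boot all_order all_algebra.
From mathcomp Require Import boolp classical_sets reals.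
From mathcomp Require Import ring lra.
Set Implicit Arguments. Unset Strict Implicit. Unset Printing Implicit Defensive.
Import Order.TTheory GRing.Theory Num.Theory.
Local Open Scope classical_set_scope.
Local Open Scope ring_scope.

Definition sqd (R : realType) (d : nat) (x y : 'rV[R]_d) : R :=
  \sum_(c < d) (x ord0 c - y ord0 c) ^+ 2.

Lemma sqd_ge0 (R : realType) (d : nat) (x y : 'rV[R]_d) : 0 <= sqd x y.
Proof. by apply: sumr_ge0 => c _; exact: sqr_ge0. Qed.

Lemma sqdC (R : realType) (d : nat) (x y : 'rV[R]_d) : sqd x y = sqd y x.
Proof. by apply: eq_bigr => c _; rewrite -sqrrN opprB. Qed.

Lemma jensen1 (R : realType) (n : nat) (w a : 'I_n -> R) :
  (forall i, 0 <= w i) -> \sum_i w i = 1 ->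
  (\sum_i w i * a i) ^+ 2 <= \sum_i w i * a i ^+ 2.
Proof.
move=> w0 w1; set s := \sum_i w i * a i.
have E : \sum_i w i * (a i - s) ^+ 2 = \sum_i w i * a i ^+ 2 - s ^+ 2.
  rewrite (eq_bigr (fun i => (w i * a i ^+ 2 - (2 * s) * (w i * a i)) + s ^+ 2 * w i)); last first.
    by move=> i _; ring.
  rewrite big_split /= sumrB -!mulr_sumr w1 -/s; ring.
rewrite -subr_ge0 -E; apply: sumr_ge0 => i _; apply: mulr_ge0 => //; exact: sqr_ge0.
Qed.

Lemma jensen (R : realType) (d n : nat) (w : 'I_n -> R) (X : 'I_n -> 'rV[R]_d) z :
  (forall i, 0 <= w i) -> \sum_i w i = 1 ->
  sqd (\sum_i w i *: X i) z <= \sum_i w i * sqd (X i) z.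
Proof.
move=> w0 w1; rewrite /sqd.
rewrite (eq_bigr (fun c => (\sum_i w i * (X i ord0 c - z ord0 c)) ^+ 2)); last first.
  move=> c _; congr (_ ^+ 2); rewrite summxE.
  transitivity (\sum_i w i * X i ord0 c - \sum_i w i * z ord0 c).
    rewrite -mulr_suml w1 mul1r; congr (_ - _).
    by apply: eq_bigr => i _; rewrite !mxE.
  by rewrite -sumrB; apply: eq_bigr => i _; rewrite mulrBr.
under [X in _ <= X]eq_bigr do rewrite mulr_sumr.
rewrite exchange_big /=; apply: ler_sum => c _; exact: jensen1.
Qed.

Lemma jensen2 (R : realType) (d n : nat) (w u : 'I_n -> R) (X : 'I_n -> 'rV[R]_d) :
  (forall i, 0 <= w i) -> \sum_i w i = 1 ->
  (forall i, 0 <= u i) -> \sum_i u i = 1 ->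
  sqd (\sum_i w i *: X i) (\sum_i u i *: X i)
    <= \sum_k \sum_l w k * u l * sqd (X k) (X l).
Proof.
move=> w0 w1 u0 u1; apply: le_trans (jensen _ _ w0 w1) _.
apply: ler_sum => k _; rewrite sqdC.
rewrite (eq_bigr (fun l => w k * (u l * sqd (X l) (X k)))); last first.
  by move=> l _; rewrite mulrA sqdC.
rewrite -mulr_sumr; apply: ler_wpM2l => //; exact: jensen.
Qed.

Lemma sqd_gt0 (R : realType) (d : nat) (x y : 'rV[R]_d) : x != y -> 0 < sqd x y.
Proof.
move=> nxy; rewrite lt0r sqd_ge0 andbT; apply: contra nxy => /eqP H.
have := psumr_eq0P (fun c _ => sqr_ge0 (x ord0 c - y ord0 c)) H => H2.
apply/eqP/matrixP => i j; rewrite (ord1 i); apply/eqP; rewrite -subr_eq0.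
by rewrite -sqrf_eq0; apply/eqP; exact: H2.
Qed.

Lemma sqd_comb (R : realType) (d : nat) (y z q : 'rV[R]_d) t :
  sqd (t *: y + (1 - t) *: z) q =
  t * sqd y q + (1 - t) * sqd z q - t * (1 - t) * sqd y z.
Proof.
rewrite /sqd !mulr_sumr -big_split /= -sumrB; apply: eq_bigr => c _; rewrite !mxE /=; ring.
Qed.

Lemma hull_pt (R : realType) (d : nat) (X : seq 'rV[R]_d) (k : 'I_(size X)) :
  conv_hull X X`_k.
Proof.
exists (fun i => (i == k)%:R); split; first by move=> i; exact: ler0n.
split.
  rewrite (bigD1 k) //= eqxx big1 ?addr0 // => i /negbTE ->; by [].
rewrite (bigD1 k) //= eqxx scale1r big1 ?addr0 // => i /negbTE ->.
by rewrite scale0r.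
Qed.

Lemma hull_sqd (R : realType) (d : nat) (X : seq 'rV[R]_d) (D : R) p q :
  (forall k l : 'I_(size X), sqd X`_k X`_l <= D) ->
  conv_hull X p -> conv_hull X q -> sqd p q <= D.
Proof.
move=> HD [w [w0 [w1 ->]]] [u [u0 [u1 ->]]].
apply: le_trans (jensen2 (fun i => X`_i) w0 w1 u0 u1) _.
apply: (@le_trans _ _ (\sum_k \sum_l w k * u l * D)).
  apply: ler_sum => k _; apply: ler_sum => l _; apply: ler_wpM2l => //.
  exact: mulr_ge0.
rewrite (eq_bigr (fun k => w k * D)); last first.
  move=> k _; rewrite (eq_bigr (fun l => w k * D * u l)); last first.
    by move=> l _; rewrite mulrAC.
  by rewrite -mulr_sumr u1 mulr1.
by rewrite -mulr_suml w1 mul1r.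
Qed.

Lemma vertex_max (R : realType) (d : nat) (X : seq 'rV[R]_d) (D : R) (k l : 'I_(size X)) :
  (forall k l : 'I_(size X), sqd X`_k X`_l <= D) ->
  sqd X`_k X`_l = D -> vertices (conv_hull X) X`_k.
Proof.
move=> HD Hkl; split; first exact: hull_pt.
move=> [y [z [t [Py Pz nyz /andP [t0 t1] E]]]].
have := sqd_comb y z X`_l t; rewrite -E Hkl => E2.
have a := hull_sqd HD Py (hull_pt l).
have b := hull_sqd HD Pz (hull_pt l).
have c := sqd_gt0 nyz.
have : t * (1 - t) * sqd y z > 0.
  by apply: mulr_gt0 => //; apply: mulr_gt0 => //; rewrite subr_gt0.
have : t * sqd y X`_l + (1 - t) * sqd z X`_l <= D.
  apply: (@le_trans _ _ (t * D + (1 - t) * D)); last by rewrite -mulrDl addrC subrK mul1r.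
  apply: lerD; apply: ler_wpM2l => //; [exact: ltW | by rewrite subr_ge0 ltW].
move: E2; set A := t * sqd y X`_l + (1 - t) * sqd z X`_l; set B := t * (1 - t) * sqd y z.
move=> E2 h1 h2; lra.
Qed.

Lemma vertex_in (R : realType) (d : nat) (X : seq 'rV[R]_d) v :
  vertices (conv_hull X) v -> exists k : 'I_(size X), v = X`_k.
Proof.
move=> [[w [w0 [w1 Ev]]] Hext].
have [k wk] : exists k, 0 < w k.
  apply/not_existsP => H; move: w1; rewrite big1 => [/eqP|i _]; first by rewrite eq_sym oner_eq0.
  have := H i; rewrite lt0r w0 andbT => /negP; rewrite negbK => /eqP //.
exists k.
have Hs : \sum_i w i = w k + \sum_(i | i != k) w i by rewrite (bigD1 k).
have Hrest : 0 <= \sum_(i | i != k) w i by apply: sumr_ge0.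
have Hv : v = w k *: X`_k + \sum_(i | i != k) w i *: X`_i by rewrite Ev (bigD1 k).
have [wk1|wk1] := eqVneq (w k) 1.
  have H0 : \sum_(i | i != k) w i = 0.
    move: Hs; rewrite w1 wk1; set S := \sum_(i | i != k) w i; lra.
  rewrite Hv wk1 scale1r big1 ?addr0 // => i ik.
  by rewrite (psumr_eq0P (fun i _ => w0 i) H0 ik) scale0r.
have wk1' : w k < 1.
  by rewrite lt_neqAle wk1 /= -w1 Hs lerDl.

have s0 : 0 < 1 - w k by rewrite subr_gt0.
set w' := fun i : 'I_(size X) => if i == k then 0 else w i / (1 - w k).
pose y := \sum_i w' i *: X`_i.
have Py : conv_hull X y.
  exists w'; split.
    by move=> i; rewrite /w'; case: eqP => // _; apply: divr_ge0 => //; exact: ltW.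
  split => //.
  rewrite (bigD1 k) //= /w' eqxx add0r.
  rewrite (eq_bigr (fun i => w i * (1 - w k)^-1)); last by move=> i /negbTE ->.
  have HS : \sum_(i | i != k) w i = 1 - w k.
    move: Hs; rewrite w1; set S := \sum_(i | i != k) w i; lra.
  by rewrite -mulr_suml HS mulfV // lt0r_neq0.
have Ey : (1 - w k) *: y = \sum_(i | i != k) w i *: X`_i.
  rewrite /y scaler_sumr (bigD1 k) //= /w' eqxx scale0r scaler0 add0r.
  apply: eq_bigr => i /negbTE ->; rewrite scalerA mulrCA mulfV ?mulr1 //.
  exact: lt0r_neq0.
have Hv2 : v = w k *: X`_k + (1 - w k) *: y by rewrite Ey.
have [Exy|nxy] := eqVneq X`_k y.
  by rewrite Hv2 -Exy -scalerDl addrC subrK scale1r.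
exfalso; apply: Hext; exists X`_k, y, (w k); split => //; first exact: hull_pt.
by rewrite wk.
Qed.

Lemma fin_argmax (R : realType) (I : finType) (i0 : I) (F : I -> R) :
  exists i, forall j, F j <= F i.
Proof.
have [i _ H] := @arg_maxP _ R I i0 xpredT F isT.
by exists i => j; exact: H.
Qed.

Lemma dmax (R : realType) (d : nat) (X : seq 'rV[R]_d) : X != [::] ->
  exists D, (forall k l : 'I_(size X), sqd X`_k X`_l <= D) /\
            exists k l : 'I_(size X), sqd X`_k X`_l = D.
Proof.
move=> XN; have k0 : 'I_(size X) by exists 0; rewrite lt0n size_eq0.
have [[k l] H] := fin_argmax (k0, k0) (fun p : 'I_(size X) * 'I_(size X) => sqd X`_p.1 X`_p.2).
exists (sqd X`_k X`_l); split; last by exists k, l.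
by move=> a b; exact: (H (a, b)).
Qed.
Lemma diam_le (R : realType) (d : nat) (S : set 'rV[R]_d) (b : R) :
  S !=set0 -> (forall p q, S p -> S q -> edist p q <= b) -> diam S <= b.
Proof.
move=> [x Sx] H; apply: ge_sup.
  by exists (edist x x), (x, x).
by move=> r [[p q] [/= Sp Sq] <-]; exact: H.
Qed.

Lemma diam_ge (R : realType) (d : nat) (S : set 'rV[R]_d) (b : R) p q :
  (forall p q, S p -> S q -> edist p q <= b) -> S p -> S q -> edist p q <= diam S.
Proof.
move=> H Sp Sq; apply: ub_le_sup; last by exists (p, q).
by exists b => r [[x y] [/= Sx Sy] <-]; exact: H.
Qed.

Lemma tnth_index (T : eqType) (s : seq T) (j : 'I_(size s)) :
  uniq s -> index (tnth (in_tuple s) j) s = j.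
Proof. by move=> us; rewrite (tnth_nth (tnth (in_tuple s) j)) index_uniq. Qed.

Lemma dir1 (R : realType) (d : nat) (P V : set 'rV[R]_d) (b : R) (m : nat) :
  V `<=` P -> diam V = diam P ->
  (forall p q, P p -> P q -> edist p q <= b) ->
  borsuk_partitionable P m -> exists2 k, (k <= m)%N & borsuk_partitionable V k.
Proof.
move=> VP dVP Hb [A [[An [Ad Acov]] Adiam]].
pose B i := A i `&` V.
pose s := [seq i <- enum 'I_m | `[< B i !=set0 >]].
have us : uniq s by rewrite filter_uniq // enum_uniq.
exists (size s).
  by rewrite -[X in (_ <= X)%N](size_enum_ord m) size_filter count_size.
exists (fun j => B (tnth (in_tuple s) j)); split; first split.
- move=> j; have := mem_tnth j (in_tuple s); rewrite mem_filter => /andP [/asboolP] //.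
- split.
  + move=> j j' njj'; have : tnth (in_tuple s) j != tnth (in_tuple s) j'.
      apply: contra njj' => /eqP E; apply/eqP/val_inj => /=.
      by rewrite -(tnth_index j us) -(tnth_index j' us) E.
    move=> /Ad E; apply/seteqP; split => x // [[Ax _] [Ax' _]].
    by rewrite -E; split.
  + apply/seteqP; split => x.
      by move=> [j _ [_ Vx]].
    move=> Vx; have : P x by exact: VP.
    rewrite -Acov => -[i _ Aix].
    have : i \in s by rewrite mem_filter mem_enum andbT; apply/asboolP; exists x.
    move=> /seq_tnthP [j Ej]; exists j => //; rewrite -Ej; by split.
- move=> j; rewrite dVP; apply: le_lt_trans (Adiam (tnth (in_tuple s) j)).
  apply: diam_le.
    by have := mem_tnth j (in_tuple s); rewrite mem_filter => /andP [/asboolP].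
  move=> p q [Ap _] [Aq _]; apply: (diam_ge (b := b)) => // x y Ax Ay.
  apply: Hb; rewrite -Acov; [exists (tnth (in_tuple s) j) | exists (tnth (in_tuple s) j)] => //.
Qed.

Definition ind {R : realType} (P : Prop) : R := (`[< P >] : bool)%:R.

Lemma indT (R : realType) (P : Prop) : P -> ind P = 1 :> R.
Proof. by move=> p; rewrite /ind asboolT. Qed.
Lemma indF (R : realType) (P : Prop) : ~ P -> ind P = 0 :> R.
Proof. by move=> p; rewrite /ind asboolF. Qed.
Lemma ind_ge0 (R : realType) (P : Prop) : 0 <= ind P :> R.
Proof. by rewrite /ind ler0n. Qed.
Lemma ind_le1 (R : realType) (P : Prop) : ind P <= 1 :> R.
Proof. by rewrite /ind; case: asboolP. Qed.

Lemma sum_delta (R : realType) (n : nat) (F : 'I_n -> R) (k : 'I_n) :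
  \sum_j F j * (j == k)%:R = F k.
Proof.
rewrite (bigD1 k) //= eqxx mulr1 big1 ?addr0 // => j /negbTE ->; exact: mulr0.
Qed.

Lemma indC (R : realType) (P : Prop) : ind P + ind (~ P) = 1 :> R.
Proof.
by case: (pselect P) => p; [rewrite indT // indF ?addr0 | rewrite indF // indT ?add0r].
Qed.

Lemma dsum (R : realType) (n : nat) (w u : 'I_n -> R) (D : R) :
  \sum_i w i = 1 -> \sum_i u i = 1 -> \sum_k \sum_l w k * u l * D = D.
Proof.
move=> w1 u1; rewrite (eq_bigr (fun k => w k * D)); last first.
  move=> k _; rewrite (eq_bigr (fun l => w k * D * u l)); last first.
    by move=> l _; rewrite mulrAC.
  by rewrite -mulr_sumr u1 mulr1.
by rewrite -mulr_suml w1 mul1r.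
Qed.

Lemma dir2 (R : realType) (d : nat) (X : seq 'rV[R]_d) (m : nat)
    (Bp : 'I_m -> set 'rV[R]_d) :
  X != [::] ->
  is_partition (vertices (conv_hull X)) Bp ->
  (forall i, diam (Bp i) < diam (vertices (conv_hull X))) ->
  borsuk_partitionable (conv_hull X) m.
Proof.
move=> XN [Bn [Bd Bcov]] Bdiam.
set P := conv_hull X; set V := vertices P.
rewrite -/P -/V in Bcov Bdiam.
have [D [HD [k1 [l1 Hkl]]]] := dmax XN.
have D0 : 0 <= D by rewrite -Hkl sqd_ge0.
have VP : V `<=` P by move=> x [].
have Hb : forall p q, P p -> P q -> edist p q <= Num.sqrt D.
  move=> p q Pp Pq; change (Num.sqrt (sqd p q) <= Num.sqrt D).
  by rewrite ler_sqrt //; exact: hull_sqd HD Pp Pq.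
have Vk1 : V X`_k1 := vertex_max HD Hkl.
have Vl1 : V X`_l1 by apply: (vertex_max (l := k1) HD); rewrite sqdC.
have Ekl : edist X`_k1 X`_l1 = Num.sqrt D by rewrite /edist -Hkl.
have dV : diam V = Num.sqrt D.
  apply/le_anti/andP; split.
    by apply: diam_le; [exists X`_k1 | move=> p q /VP Pp /VP Pq; exact: Hb].
  by rewrite -Ekl; apply: (diam_ge (b := Num.sqrt D)) => // p q /VP Pp /VP Pq; exact: Hb.
have dP : diam P = Num.sqrt D.
  apply/le_anti/andP; split.
    by apply: diam_le; [exists X`_k1; exact: VP | exact: Hb].
  by rewrite -Ekl; apply: (diam_ge (b := Num.sqrt D)) => //; exact: VP.
have BV : forall i, Bp i `<=` V by move=> i x Bx; rewrite -Bcov; exists i.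
have Vcov : forall x, V x -> exists i, Bp i x by move=> x; rewrite -Bcov => -[i _ Bx]; exists i.
have Buniq : forall i j x, Bp i x -> Bp j x -> i = j.
  move=> i j x Bi Bj; apply/eqP; apply: contraT => /Bd E.
  have : (Bp i `&` Bp j) x by split.
  by rewrite E.

have BP : forall i x, Bp i x -> P x by move=> i x /BV /VP.
have [i0 Bi0] := Vcov _ Vk1.
have Dpos : 0 < D.
  rewrite -sqrtr_gt0 -dV; apply: (le_lt_trans _ (Bdiam i0)).
  apply: le_trans (sqrtr_ge0 (sqd X`_k1 X`_k1)) _.
  apply: (diam_ge (b := Num.sqrt D)) => // p q /BP Pp /BP Pq; exact: Hb.
have Bsq : forall i p q, Bp i p -> Bp i q -> sqd p q < D.
  move=> i p q Bpi Bqi; rewrite -ltr_sqrt // -dV; apply: (le_lt_trans _ (Bdiam i)).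
  change (edist p q <= diam (Bp i)).
  apply: (diam_ge (b := Num.sqrt D)) => // x y /BP Px /BP Py; exact: Hb.
have mpos : (0 < m)%N by case: (i0) => /= j jm; apply: leq_ltn_trans jm.
set M : R := m%:R.
have M1 : 1 <= M by rewrite /M ler1n.
pose a (i : 'I_m) (w : 'I_(size X) -> R) := \sum_(k < size X) ind (Bp i X`_k) * w k.
pose nn (w : 'I_(size X) -> R) := \sum_(k < size X) ind (~ V X`_k) * w k.
pose Good x i := exists w : 'I_(size X) -> R, [/\ forall k, 0 <= w k, \sum_(k < size X) w k = 1,
   x = \sum_(k < size X) w k *: X`_k & 1 - nn w <= a i w * M].
have Gv : forall i x, Bp i x -> Good x i.
  move=> i x Bx; have [k Exk] := vertex_in (BV _ _ Bx).
  exists (fun j => (j == k)%:R); split.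
  - by move=> j; exact: ler0n.
  - by rewrite -[RHS](sum_delta (fun=> (1:R)) k); apply: eq_bigr => j _; rewrite mul1r.
  - rewrite Exk (bigD1 k) //= eqxx scale1r big1 ?addr0 // => j /negbTE ->.
    by rewrite scale0r.
  - rewrite /nn /a !sum_delta indF; last by rewrite -Exk; apply; exact: BV Bx.
    by rewrite indT -?Exk // subr0 mul1r.
have Gp : forall x, P x -> exists i, Good x i.
  move=> x [w [w0 [w1 Ex]]].
  have [imax Hmax] := fin_argmax i0 (fun i => a i w).
  exists imax, w; split => //.
  have Hs : \sum_i a i w = 1 - nn w.
    rewrite /a exchange_big /=.
    rewrite (eq_bigr (fun k : 'I_(size X) => ind (V X`_k) * w k)); last first.
      move=> k _; rewrite -mulr_suml; congr (_ * _).
      case: (pselect (V X`_k)) => Vk.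
        have [j Bj] := Vcov _ Vk; rewrite indT // (bigD1 j) //= indT // big1 ?addr0 //.
        by move=> j' nj; rewrite indF // => Bj'; move: nj; rewrite (Buniq _ _ _ Bj' Bj) eqxx.
      by rewrite indF // big1 // => j _; rewrite indF // => /BV.
    apply/eqP; rewrite eq_sym subr_eq /nn -big_split /= -[X in X == _]w1; apply/eqP.
    apply: eq_bigr => k _.
    by rewrite -mulrDl indC mul1r.
  rewrite -Hs; apply: (@le_trans _ _ (\sum_(i < m) a imax w)).
    by apply: ler_sum => i _; exact: Hmax.
  by rewrite sumr_const card_ord -mulr_natr.
pose G (k l : 'I_(size X)) : Prop := ~ V X`_k \/ ~ V X`_l \/ exists i, Bp i X`_k /\ Bp i X`_l.
have GD : forall k l, G k l -> sqd X`_k X`_l < D.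
  move=> k l [nk|[nl|[i [Bk Bl]]]].
  - have := HD k l; rewrite le_eqVlt => /orP [/eqP E|//].
    by exfalso; apply: nk; exact: vertex_max HD E.
  - have := HD l k; rewrite sqdC le_eqVlt => /orP [/eqP E|//].
    by exfalso; apply: nl; apply: (vertex_max (l := k) HD); rewrite sqdC.
  - exact: Bsq Bk Bl.
have [c [cD Gc]] : exists c, c < D /\ forall k l, G k l -> sqd X`_k X`_l <= c.
  have [[kc lc] Hc] := fin_argmax (k1, k1) (fun p : 'I_(size X) * 'I_(size X) =>
      if `[< G p.1 p.2 >] then sqd X`_p.1 X`_p.2 else 0).
  exists (if `[< G kc lc >] then sqd X`_kc X`_lc else 0); split.
    by case: asboolP => [/GD|].
  by move=> k l Gkl; have := Hc (k, l); rewrite /= asboolT.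
have pairb : forall i x y, Good x i -> Good y i ->
    sqd x y * (4 * M ^+ 2) <= D * (4 * M ^+ 2) - (D - c).
  move=> i x y [w [w0 w1 Ex Hw]] [u [u0 u1 Ey Hu]].
  pose g := \sum_(k < size X) \sum_(l < size X) w k * u l * ind (G k l).
  have H1 : sqd x y <= D - (D - c) * g.
    rewrite Ex Ey; apply: le_trans (jensen2 _ w0 w1 u0 u1) _.
    have -> : D - (D - c) * g =
        \sum_k \sum_l w k * u l * (D - (D - c) * ind (G k l)).
      rewrite -[X in X - _](dsum D w1 u1) /g mulr_sumr -sumrB.
      apply: eq_bigr => k _; rewrite mulr_sumr -sumrB; apply: eq_bigr => l _.
      ring.
    apply: ler_sum => k _; apply: ler_sum => l _.
    apply: ler_wpM2l; first exact: mulr_ge0.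
    case: (pselect (G k l)) => Gkl.
      by rewrite indT // mulr1 opprB addrC subrK; exact: Gc.
    by rewrite indF // mulr0 subr0.
  have g0 : forall k l, 0 <= w k * u l * ind (G k l).
    by move=> k l; rewrite !mulr_ge0.
  have Hnw : nn w <= g.
    apply: ler_sum => k _; case: (pselect (V X`_k)) => Vk.
      by rewrite indF ?mul0r //; apply: sumr_ge0 => l _.
    rewrite indT // mul1r (eq_bigr (fun l => w k * u l)); last first.
      by move=> l _; rewrite indT ?mulr1 //; left.
    by rewrite -mulr_sumr u1 mulr1.
  have Hnu : nn u <= g.
    rewrite /g exchange_big /=.
    apply: ler_sum => l _; case: (pselect (V X`_l)) => Vl.
      by rewrite indF ?mul0r //; apply: sumr_ge0 => k _.
    rewrite indT // mul1r (eq_bigr (fun k => u l * w k)); last first.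
      by move=> k _; rewrite indT ?mulr1 1?mulrC //; right; left.
    by rewrite -mulr_sumr w1 mulr1.
  have Haa : a i w * a i u <= g.
    rewrite /a mulr_suml; apply: ler_sum => k _; rewrite mulr_sumr.
    apply: ler_sum => l _.
    case: (pselect (Bp i X`_k /\ Bp i X`_l)) => [[Bk Bl]|nB].
      rewrite !indT ?mul1r ?mulr1 //; right; right; by exists i.
    case: (pselect (Bp i X`_k)) => Bk.
      rewrite [ind (Bp i X`_l)]indF ?mul0r ?mulr0 ?g0 // => Bl; exact: nB.
    by rewrite indF ?mul0r ?g0.
  have nw0 : 0 <= nn w by apply: sumr_ge0 => k _; rewrite mulr_ge0 ?ind_ge0.
  have nu0 : 0 <= nn u by apply: sumr_ge0 => k _; rewrite mulr_ge0 ?ind_ge0.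
  have aw0 : 0 <= a i w by apply: sumr_ge0 => k _; rewrite mulr_ge0 ?ind_ge0.
  have au0 : 0 <= a i u by apply: sumr_ge0 => k _; rewrite mulr_ge0 ?ind_ge0.
  have Hg : 1 <= g * (4 * M ^+ 2).
    have M2 : 1 <= M ^+ 2 by rewrite expr_ge1.
    case: (lerP (1/2) (nn w)) => hw.
      nra.
    case: (lerP (1/2) (nn u)) => hu.
      nra.
    have h1 : 1/2 <= a i w * M by lra.
    have h2 : 1/2 <= a i u * M by lra.
    have : 1/4 <= (a i w * M) * (a i u * M) by nra.
    nra.
  have cD' : 0 < D - c by rewrite subr_gt0.
  have M4 : 0 < 4 * M ^+ 2 by apply: mulr_gt0 => //; apply: exprn_gt0; lra.
  set K := 4 * M ^+ 2 in Hg M4 *.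
  have : sqd x y * K <= (D - (D - c) * g) * K by rewrite ler_pM2r.
  nra.
have M4 : 0 < 4 * M ^+ 2 by apply: mulr_gt0 => //; apply: exprn_gt0; lra.
set K := 4 * M ^+ 2 in pairb M4.
have hb : forall i x y, Good x i -> Good y i -> sqd x y <= D - (D - c) / K.
  move=> i x y Gx Gy.
  have E : (D - (D - c) / K) * K = D * K - (D - c).
    by field; rewrite lt0r_neq0.
  rewrite -(ler_pM2r M4) E; exact: (pairb i x y Gx Gy).
have cD' : 0 < D - c by rewrite subr_gt0.
have bD : D - (D - c) / K < D.
  have : 0 < (D - c) / K by apply: divr_gt0.
  lra.
pose sel x : option 'I_m := match pselect (exists i, `[< Good x i >]) with
   left h => Some (xchoose h) | right _ => None end.
have selP : forall x i, sel x = Some i -> Good x i.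
  rewrite /sel => x i; case: pselect => // h [<-]; exact/asboolP/(xchooseP h).
have selS : forall x, P x -> exists i, sel x = Some i.
  move=> x Px; rewrite /sel; case: pselect => [h|nh]; first by eexists.
  exfalso; apply: nh; have [i Gi] := Gp x Px; exists i; exact/asboolP.
pose A i := Bp i `|` [set x | P x /\ ~ V x /\ sel x = Some i].
have AG : forall i x, A i x -> Good x i.
  by move=> i x [/Gv //|[_ [_ /selP]]].
exists A; split; first split; [|split|].
- by move=> i; have [x Bx] := Bn i; exists x; left.
- move=> i j nij; apply/seteqP; split => x // [Ai Aj]; exfalso; move: nij.
  case: Ai => [Bi|[Px [nVx si]]]; case: Aj => [Bj|[Px' [nVx' sj]]].
  + by rewrite (Buniq _ _ _ Bi Bj) eqxx.
  + by move=> _; apply: nVx'; exact: BV Bi.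
  + by move=> _; apply: nVx; exact: BV Bj.
  + by move: si; rewrite sj => -[->]; rewrite eqxx.
- apply/seteqP; split => x.
    by move=> [i _ [/BP|[]]].
  move=> Px; case: (pselect (V x)) => Vx.
    by have [i Bx] := Vcov x Vx; exists i => //; left.
  by have [i si] := selS x Px; exists i => //; right.
- move=> i; rewrite dP.
  have [x0 Bx0] := Bn i.
  have b0 : 0 <= D - (D - c) / K.
    apply: le_trans (hb i x0 x0 (Gv _ _ Bx0) (Gv _ _ Bx0)); exact: sqd_ge0.
  apply: (@le_lt_trans _ _ (Num.sqrt (D - (D - c) / K))); last by rewrite ltr_sqrt.
  apply: diam_le; first by exists x0; left.
  move=> p q Ap Aq; change (Num.sqrt (sqd p q) <= Num.sqrt (D - (D - c) / K)).
  by rewrite ler_sqrt //; exact: hb (AG _ _ Ap) (AG _ _ Aq).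
Qed.

Lemma diamPV (R : realType) (d : nat) (X : seq 'rV[R]_d) : X != [::] ->
  exists b, diam (vertices (conv_hull X)) = diam (conv_hull X) /\
    forall p q, conv_hull X p -> conv_hull X q -> edist p q <= b.
Proof.
move=> XN; set P := conv_hull X; set V := vertices P.
have [D [HD [k1 [l1 Hkl]]]] := dmax XN.
have D0 : 0 <= D by rewrite -Hkl sqd_ge0.
have VP : V `<=` P by move=> x [].
have Hb : forall p q, P p -> P q -> edist p q <= Num.sqrt D.
  move=> p q Pp Pq; change (Num.sqrt (sqd p q) <= Num.sqrt D).
  by rewrite ler_sqrt //; exact: hull_sqd HD Pp Pq.
have Vk1 : V X`_k1 := vertex_max HD Hkl.
have Vl1 : V X`_l1 by apply: (vertex_max (l := k1) HD); rewrite sqdC.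
have Ekl : edist X`_k1 X`_l1 = Num.sqrt D by rewrite /edist -Hkl.
have dV : diam V = Num.sqrt D.
  apply/le_anti/andP; split.
    by apply: diam_le; [exists X`_k1 | move=> p q /VP Pp /VP Pq; exact: Hb].
  by rewrite -Ekl; apply: (diam_ge (b := Num.sqrt D)) => // p q /VP Pp /VP Pq; exact: Hb.
have dP : diam P = Num.sqrt D.
  apply/le_anti/andP; split.
    by apply: diam_le; [exists X`_k1; exact: VP | exact: Hb].
  by rewrite -Ekl; apply: (diam_ge (b := Num.sqrt D)) => //; exact: VP.
by exists (Num.sqrt D); rewrite dV dP.
Qed.

Theorem proposition2p1 (R : realType) (d : nat) (P : set 'rV[R]_d) :
  polytope P -> borsuk_number P = borsuk_number (vertices P).
Proof.
move=> [X [XN ->]].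
have [b [dVP Hb]] := diamPV XN.
have VP : vertices (conv_hull X) `<=` conv_hull X by move=> x [].
have H1 := fun m => @dir1 _ _ _ _ b m VP dVP Hb.
have H2 : forall m, borsuk_partitionable (vertices (conv_hull X)) m ->
    borsuk_partitionable (conv_hull X) m.
  move=> m [Bp [Bpart Bdiam]]; exact: dir2 XN Bpart Bdiam.
rewrite /borsuk_number.
case: pselect => [hP|nP]; case: pselect => [hV|nV].
- congr Some; apply/eqP; rewrite eqn_leq; apply/andP; split.
    case: ex_minnP => mP /asboolP HmP minP.
    case: ex_minnP => mV /asboolP HmV minV.
    apply: minP; apply/asboolP; exact: H2.
  case: ex_minnP => mV /asboolP HmV minV.
  case: ex_minnP => mP /asboolP HmP minP.
  have [k km Hk] := H1 _ HmP.
  apply: leq_trans km; apply: minV; exact/asboolP.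
- exfalso; apply: nV; have [m /asboolP Hm] := hP.
  by have [k _ Hk] := H1 _ Hm; exists k; exact/asboolP.
- exfalso; apply: nP; have [m /asboolP Hm] := hV.
  by exists m; apply/asboolP; exact: H2.
- by [].
Qed.
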